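(* Let $\nu,m_1,m_2,t$ be positive integers with $\nu>m_i\ge t+1$ for $i\in\{1,2\}$. Then $$c_1(\nu,m_1,m_2,t)>s_0(\nu,m_1,m_2+1,t)\,N'(t;m_2;2\nu).$$ Moreover, if additionally $2\nu\ge m_1+2m_2-t+4$, then $$c_1(\nu,m_1,m_2,t)>\left({m_2-t+1\brack 1}-q^{-2}\right)N'(t+1;m_1;2\nu)\,N'(t;m_2;2\nu).$$
   Context: Let $q$ be a prime power, $\nu\ge 1$ an integer, and $f$ a non-degenerate alternating bilinear form on $V=\mathbb F_q^{2\nu}$. A subspace $W\le V$ is totally isotropic if $f(x,y)=0$ for all $x,y\in W$. For $0\le m\le \nu$, $\mathcal P_m$ denotes the set of all $m$-dimensional totally isotropic subspaces of $V$; ${A\brack k}$ is the set of $k$-dimensional subspaces of a subspace $A$. Gaussian binomial coefficient: ${n\brack k}=\prod_{i=0}^{k-1}\frac{q^{n-i}-1}{q^{k-i}-1}$, ${n\brack 0}=1$, ${n\brack k}=0$ for $k<0$. For integers $0\le a\le m\le\nu$, $N'(a;m;2\nu)=\prod_{i=1}^{m-a}\frac{q^{2(\nu-m+i)}-1}{q^{i}-1}$ (the number of members of $\mathcal P_m$ containing a fixed member of $\mathcal P_a$). For $M\in\mathcal P_{m_2+1}$ and a $t$-dimensional subspace $T\subseteq M$ let $\mathcal C_1(M,T;m_1,t)=\{F\in\mathcal P_{m_1}: T\subseteq F,\ \dim(F\cap M)\ge t+1\}$ and $\mathcal C_2(M,T;m_2)=\{F\in\mathcal P_{m_2}: T\subseteq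 F\}\cup{M\brack m_2}$. The product $|\mathcal C_1(M,T;m_1,t)|\cdot|\mathcal C_2(M,T;m_2)|$ does not depend on the choice of $M,T$; it is denoted $c_1(\nu,m_1,m_2,t)$. Also $s_0(\nu,m,s,t)={s-t\brack 1}N'(t+1;m;2\nu)-q{s-t\brack 2}N'(t+2;m;2\nu)$. *)

(* Defs.v *)
From mathcomp Require Import all_boot all_order all_algebra.
Set Implicit Arguments. Unset Strict Implicit. Unset Printing Implicit Defensive.
Import GRing.Theory Num.Theory.
Local Open Scope ring_scope.

(* Gaussian binomial coefficient [n brack k]_q as a rational, q given as nat. *)
Definition gbin (q n k : nat) : rat :=
  \prod_(i < k) (((q%:R : rat) ^+ (n - i) - 1) / ((q%:R : rat) ^+ (k - i) - 1)).

(* N'(a; m; 2nu): number of members of P_m containing a fixed member of P_a.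
   For a > m this count is 0 (convention). *)
Definition Nprime (q a m nu : nat) : rat :=
  if (a <= m)%N then
    \prod_(1 <= i < (m - a).+1)
       (((q%:R : rat) ^+ (2 * (nu - m + i)) - 1) / ((q%:R : rat) ^+ i - 1))
  else 0.

Definition s0 (q nu m s t : nat) : rat :=
  gbin q (s - t) 1 * Nprime q t.+1 m nu
  - (q%:R : rat) * gbin q (s - t) 2 * Nprime q t.+2 m nu.

Section Symplectic.
Variables (F : finFieldType) (n : nat) (B : 'M[F]_n).

Definition form (x y : 'rV[F]_n) : F := (x *m B *m y^T) 0 0.

(* subspaces of F^n are represented canonically by matrices A with <<A>> = A;
   the subspace is the row space of A *)
Definition is_subspace (A : 'M[F]_n) : bool := (<<A>>%MS == A).

Definition tot_iso (A : 'M[F]_n) : bool :=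
  [forall x : 'rV[F]_n, forall y : 'rV[F]_n,
     ((x <= A)%MS && (y <= A)%MS) ==> (form x y == 0)].

Definition Pm (m : nat) : {set 'M[F]_n} :=
  [set A | [&& is_subspace A, \rank A == m & tot_iso A]].

Definition subsp_of (A : 'M[F]_n) (k : nat) : {set 'M[F]_n} :=
  [set W | [&& is_subspace W, \rank W == k & (W <= A)%MS]].

Definition C1 (M T : 'M[F]_n) (m1 t : nat) : {set 'M[F]_n} :=
  [set W in Pm m1 | (T <= W)%MS && (t.+1 <= \rank (W :&: M)%MS)%N].

Definition C2 (M T : 'M[F]_n) (m2 : nat) : {set 'M[F]_n} :=
  [set W in Pm m2 | (T <= W)%MS] :|: subsp_of M m2.

End Symplectic.

Definition alt_form (F : finFieldType) (n : nat) (B : 'M[F]_n) : Prop :=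
  forall x : 'rV[F]_n, form B x x = 0.

Definition nondegen_form (F : finFieldType) (n : nat) (B : 'M[F]_n) : Prop :=
  forall x : 'rV[F]_n, (forall y : 'rV[F]_n, form B x y = 0) -> x = 0.

(* Main.v *)
Require Import Defs.
From mathcomp Require Import all_boot all_order all_algebra.
From mathcomp Require Import ring lra zify.
Set Implicit Arguments. Unset Strict Implicit. Unset Printing Implicit Defensive.
Import Order.TTheory GRing.Theory Num.Theory.
Local Open Scope ring_scope.

Section Lin.
Variables (F : finFieldType) (n : nat).
Local Open Scope nat_scope.

Lemma card_subrow (A : 'M[F]_n) :
  #|[set x : 'rV[F]_n | (x <= A)%MS]| = (#|F| ^ \rank A)%N.
Proof.
have -> : [set x : 'rV[F]_n | (x <= A)%MS] =
   [set v *m row_base A | v : 'rV[F]_(\rank A)].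
  apply/setP => x; rewrite inE; apply/idP/imsetP.
    rewrite -(eq_row_base A) => /submxP [D ->]; by exists D.
  by move=> [v _ ->]; rewrite -(eq_row_base A) submxMl.
rewrite card_imset; last exact: row_free_inj (row_base_free A).
rewrite (_ : #|_| = #|{: 'rV[F]_(\rank A)}|); first by rewrite card_mx mul1n.
by apply: eq_card => v; rewrite !inE.
Qed.


Lemma cardD_sub (T A : 'M[F]_n) : (T <= A)%MS ->
  #|[set x : 'rV[F]_n | (x <= A)%MS && ~~ (x <= T)%MS]| + #|F| ^ \rank T
  = (#|F| ^ \rank A)%N.
Proof.
move=> TA; rewrite -!card_subrow -(cardsID [set x : 'rV[F]_n | (x <= T)%MS]
   [set x : 'rV[F]_n | (x <= A)%MS]) addnC.
have -> : [set x : 'rV[F]_n | (x <= A)%MS] :&: [set x : 'rV[F]_n | (x <= T)%MS]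
   = [set x : 'rV[F]_n | (x <= T)%MS].
  apply/setP => x; rewrite !inE; apply/idP/idP => [/andP[]//|xT].
  by rewrite xT (submx_trans xT TA).
have -> : [set x : 'rV[F]_n | (x <= A)%MS] :\: [set x : 'rV[F]_n | (x <= T)%MS]
   = [set x : 'rV[F]_n | (x <= A)%MS && ~~ (x <= T)%MS].
  by apply/setP => x; rewrite !inE andbC.
by [].
Qed.

Lemma rank_addv (T : 'M[F]_n) (x : 'rV[F]_n) : ~~ (x <= T)%MS ->
  \rank (T + x)%MS = (\rank T).+1.
Proof.
move=> xT; apply/eqP; rewrite eqn_leq; apply/andP; split.
  apply: leq_trans (mxrank_adds_leqif T x) _.
  by rewrite -[(\rank T).+1]addn1 leq_add2l rank_leq_row.
rewrite (ltn_leqif (mxrank_leqif_sup (addsmxSl T x))).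
apply: contra xT => h; exact: submx_trans (addsmxSr T x) h.
Qed.

Lemma is_subspace_gen (A : 'M[F]_n) : is_subspace <<A>>%MS.
Proof. by rewrite /is_subspace genmx_id. Qed.

Lemma sub_eq_of_rank (A X : 'M[F]_n) : is_subspace X -> is_subspace A ->
  (A <= X)%MS -> \rank A = \rank X -> A = X.
Proof.
move=> /eqP sX /eqP sA AX rAX; rewrite -sX -sA; apply/genmxP.
by rewrite -(mxrank_leqif_eq AX) rAX.
Qed.

Lemma gen_add_eq (T X : 'M[F]_n) (x : 'rV[F]_n) : is_subspace X ->
  \rank X = (\rank T).+1 -> (T <= X)%MS ->
  (<<(T + x)%MS>>%MS == X) = (x <= X)%MS && ~~ (x <= T)%MS.
Proof.
move=> sX rX TX; apply/eqP/andP => [eX | [xX xT]].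
  rewrite -eX in rX *; rewrite genmxE addsmxSr; split => //; apply/negP => xT.
  move: rX; rewrite genmxE.
  have -> : (T + x :=: T)%MS by apply/eqmxP; rewrite addsmx_sub submx_refl xT addsmxSl.
  by move/eqP; rewrite eqn_leq ltnn andbF.
apply: sub_eq_of_rank => //; first exact: is_subspace_gen.
  by rewrite genmxE addsmx_sub TX.
by rewrite genmxE rank_addv.
Qed.

Definition Sb (T A : 'M[F]_n) (k : nat) : {set 'M[F]_n} :=
  [set X : 'M[F]_n | [&& is_subspace X, \rank X == k, (T <= X)%MS & (X <= A)%MS]].

Lemma card_Sb (T A : 'M[F]_n) : (T <= A)%MS ->
  #|Sb T A (\rank T).+1| * (#|F| ^ (\rank T).+1 - #|F| ^ \rank T)
   = (#|F| ^ \rank A - #|F| ^ \rank T)%N.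
Proof.
move=> TA; rewrite -(cardD_sub TA) addnK.
set D := [set x : 'rV[F]_n | _].
rewrite -[#|D|]sum1_card (partition_big (fun x => <<(T + x)%MS>>%MS) (mem (Sb T A (\rank T).+1))).
  rewrite (eq_bigr (fun _ => (#|F| ^ (\rank T).+1 - #|F| ^ \rank T))) ?sum_nat_const //.
  move=> X HX; have : X \in Sb T A (\rank T).+1 by []. rewrite /Sb inE => /and4P [sX /eqP rX TX XA].
  rewrite -rX -(cardD_sub TX) addnK -[RHS]sum1_card; apply: eq_bigl => x.
  rewrite !inE gen_add_eq //; apply/idP/idP => [/andP[/andP[_ ->] /andP[->]]//|/andP[xX ->]].
  by rewrite xX (submx_trans xX XA).
move=> x; rewrite inE => /andP[xA xT]; suff : <<(T + x)%MS>>%MS \in Sb T A (\rank T).+1 by []. rewrite /Sb inE is_subspace_gen genmxE rank_addv //.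
by rewrite !genmxE eqxx addsmxSl addsmx_sub xA TA.
Qed.

End Lin.

Lemma dcount (I J : finType) (X : {set I}) (Y : {set J}) (R : I -> J -> bool) :
  (\sum_(x in X) #|[set y in Y | R x y]| = \sum_(y in Y) #|[set x in X | R x y]|)%N.
Proof.
have E (K L : finType) (Z : {set L}) (f : L -> bool) :
   #|[set y in Z | f y]| = (\sum_(y in Z) (f y : nat))%N.
  rewrite -sum1_card big_mkcond [RHS]big_mkcond; apply: eq_bigr => y _.
  by rewrite !inE; case: (y \in Z); case: (f y).
rewrite (eq_bigr _ (fun x _ => E I J Y (R x))).
rewrite (eq_bigr _ (fun y _ => E J I X (fun x => R x y))).
exact: exchange_big.
Qed.

Section RatCount.
Variables (F : finFieldType) (n : nat).
Local Notation q := (#|F|%:R : rat).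
Definition kk (a b : nat) : rat := (q ^+ a - q ^+ b) / (q ^+ b.+1 - q ^+ b).

Lemma q_gt1 : (1 < #|F|)%N.
Proof. by apply/card_gt1P; exists 0, 1; rewrite !inE eq_sym oner_eq0. Qed.

Lemma q_gt1r : 1 < q.
Proof. by rewrite ltr1n q_gt1. Qed.

Lemma qexp_lt (a b : nat) : (a < b)%N -> q ^+ a < q ^+ b.
Proof. by move=> ab; rewrite ltr_eXn2l // q_gt1r. Qed.

Lemma qexp_le (a b : nat) : (a <= b)%N -> q ^+ a <= q ^+ b.
Proof. by move=> ab; rewrite ler_eXn2l // q_gt1r. Qed.

Lemma card_Sb_rat (T A : 'M[F]_n) : (T <= A)%MS ->
  (#|Sb T A (\rank T).+1|%:R : rat) = kk (\rank A) (\rank T).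
Proof.
move=> TA; have := card_Sb TA; move/(congr1 (fun k => (k%:R : rat))).
have q0 : (0 < #|F|)%N by apply: ltn_trans q_gt1.
have le1 : (#|F| ^ \rank T <= #|F| ^ (\rank T).+1)%N by rewrite leq_pexp2l.
have le2 : (#|F| ^ \rank T <= #|F| ^ \rank A)%N by rewrite leq_pexp2l // mxrankS.
rewrite natrM !natrB // !natrX => H; rewrite /kk -H mulfK //.
by rewrite subr_eq0 Order.POrderTheory.gt_eqF // qexp_lt.
Qed.

Lemma kk_neq0 (a b : nat) : (b < a)%N -> kk a b != 0.
Proof.
move=> ba; rewrite /kk mulf_neq0 // ?invr_eq0 subr_eq0 Order.POrderTheory.gt_eqF //;
 exact: qexp_lt.
Qed.

Lemma card_Sb2_rat (T A : 'M[F]_n) : (T <= A)%MS ->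
  (#|Sb T A (\rank T).+2|%:R : rat) =
  kk (\rank A) (\rank T) * kk (\rank A) (\rank T).+1 / kk (\rank T).+2 (\rank T).
Proof.
move=> TA.
have H := dcount (Sb T A (\rank T).+1) (Sb T A (\rank T).+2) (fun P U => (P <= U)%MS).
have E1 : forall U, U \in Sb T A (\rank T).+2 ->
    [set x in Sb T A (\rank T).+1 | (x <= U)%MS] = Sb T U (\rank T).+1.
  move=> U; rewrite /Sb inE => /and4P [_ _ _ UA].
  apply/setP => P; rewrite !inE; apply/idP/idP.
    by move=> /andP [/and4P [-> -> -> _] ->].
  by move=> /and4P [-> -> -> PU]; rewrite PU (submx_trans PU UA).
have E2 : forall P, P \in Sb T A (\rank T).+1 ->
    [set y in Sb T A (\rank T).+2 | (P <= y)%MS] = Sb P A (\rank P).+1.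
  move=> P; rewrite /Sb inE => /and4P [_ /eqP rP TP _].
  apply/setP => U; rewrite !inE rP; apply/idP/idP.
    by move=> /andP [/and4P [-> -> _ ->] ->].
  by move=> /and4P [-> -> PU ->]; rewrite (submx_trans TP PU).
move/(congr1 (fun k => (k%:R : rat))): H; rewrite !natr_sum.
rewrite (eq_bigr (fun _ => kk (\rank A) (\rank T).+1)); last first.
  move=> P HP; rewrite E2 // card_Sb_rat; last by move: HP; rewrite /Sb inE => /and4P[].
  by move: HP; rewrite /Sb inE => /and4P[_ /eqP -> _].
rewrite [in RHS](eq_bigr (fun _ => kk (\rank T).+2 (\rank T))); last first.
  move=> U HU; rewrite E1 // card_Sb_rat; last by move: HU; rewrite /Sb inE => /and4P[].
  by move: HU; rewrite /Sb inE => /and4P[_ /eqP -> _].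
rewrite !sumr_const -(mulr_natl (kk (\rank A) _)) -(mulr_natl (kk _.+2 _)) card_Sb_rat // => H.
by rewrite H mulfK // kk_neq0.
Qed.
End RatCount.

Lemma entry_form (R : comNzRingType) (n m k : nat) (X : 'M[R]_(m, n)) (C : 'M[R]_n)
   (Y : 'M[R]_(k, n)) i j :
  (X *m C *m Y^T) i j = ((row i X) *m C *m (row j Y)^T) 0 0.
Proof.
rewrite tr_row colE mulmxA -colE -!row_mul !mxE; apply: eq_bigr => l _; rewrite !mxE; congr (_ * _); apply: eq_bigr => l2 _; rewrite !mxE.
Qed.

Section Symp.
Variables (F : finFieldType) (n : nat) (B : 'M[F]_n).
Hypothesis Balt : alt_form B.
Hypothesis Bnd : nondegen_form B.
Local Notation form := Defs.form.

Lemma formDl x y z : form B (x + y) z = form B x z + form B y z.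
Proof. by rewrite /form !mulmxDl mxE. Qed.

Lemma formDr x y z : form B x (y + z) = form B x y + form B x z.
Proof. by rewrite /form linearD /= mulmxDr mxE. Qed.

Lemma form_skew x y : form B x y = - form B y x.
Proof.
apply/eqP; rewrite -subr_eq0 opprK.
have := Balt (x + y); rewrite formDl !formDr (Balt x) (Balt y) add0r addr0 => ->.
done.
Qed.

Lemma skewB : B^T = - B.
Proof.
apply/matrixP => i j; rewrite !mxE.
have E k l : B k l = form B (row k 1%:M) (row l 1%:M).
  by rewrite /form -entry_form trmx1 mulmx1 mul1mx.
by rewrite !E form_skew.
Qed.

Lemma tot_isoE (A : 'M[F]_n) : tot_iso B A = (A *m B *m A^T == 0).
Proof.
apply/forallP/eqP => [H | H].
  apply/matrixP => i j; rewrite entry_form [RHS]mxE.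
  have := H (row i A); move/forallP/(_ (row j A)).
  by rewrite !row_sub /= => /eqP.
move=> x; apply/forallP => y; apply/implyP => /andP [/submxP [D ->] /submxP [E ->]].
by rewrite /form trmx_mul !mulmxA -(mulmxA D) -(mulmxA D) H mulmx0 mul0mx mxE.
Qed.


Definition perp (U : 'M[F]_n) := kermx (B *m U^T).

Lemma sub_perp m (X : 'M[F]_(m, n)) U : (X <= perp U)%MS = (X *m B *m U^T == 0).
Proof. by rewrite sub_kermx mulmxA. Qed.

Lemma B_free : row_free B.
Proof.
rewrite -kermx_eq0; apply/eqP/row_matrixP => i; rewrite row0.
have H : row i (kermx B) *m B = 0 by rewrite -row_mul mulmx_ker row0.
by apply: Bnd => y; rewrite /form H mul0mx mxE.
Qed.

Lemma rank_perp U : \rank (perp U) = (n - \rank U)%N.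
Proof.
rewrite mxrank_ker; congr (_ - _)%N.
by rewrite -mxrank_tr trmx_mul trmxK mxrankMfree // row_free_unit unitmx_tr -row_free_unit B_free.
Qed.

Lemma TI_perp U : tot_iso B U -> (U <= perp U)%MS.
Proof. by rewrite sub_perp tot_isoE. Qed.

Lemma TI_sub m1 m2 (A : 'M[F]_(m1, n)) (C : 'M[F]_(m2, n)) :
  (A <= C)%MS -> C *m B *m C^T = 0 -> A *m B *m A^T = 0.
Proof.
by move=> /submxP [D ->] H; rewrite trmx_mul !mulmxA -(mulmxA D) -(mulmxA D) H mulmx0 mul0mx.
Qed.

Lemma tot_iso_add (U : 'M[F]_n) (x : 'rV[F]_n) :
  tot_iso B U -> (x <= perp U)%MS -> tot_iso B <<(U + x)%MS>>%MS.
Proof.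
rewrite tot_isoE sub_perp => /eqP HU /eqP Hx; rewrite tot_isoE; apply/eqP.
apply: (@TI_sub _ _ _ (col_mx U x)); first by rewrite genmxE addsmxE.
rewrite tr_col_mx mul_col_mx mul_col_row HU Hx.
have -> : U *m B *m x^T = 0.
  by apply/trmx_inj; rewrite trmx0 !trmx_mul !trmxK skewB mulNmx mulmxN mulmxA Hx oppr0.
have -> : x *m B *m x^T = 0.
  apply/matrixP => i j; rewrite !ord1 [RHS]mxE. exact: (Balt x).
exact: block_mx0.
Qed.


Lemma inPm (A : 'M[F]_n) m :
  (A \in Pm B m) = [&& is_subspace A, \rank A == m & tot_iso B A].
Proof. by rewrite /Pm inE. Qed.

Lemma inSb (T A X : 'M[F]_n) k :
  (X \in Sb T A k) = [&& is_subspace X, \rank X == k, (T <= X)%MS & (X <= A)%MS].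
Proof. by rewrite /Sb inE. Qed.

Lemma ext1E (U : 'M[F]_n) : tot_iso B U ->
  [set X in Pm B (\rank U).+1 | (U <= X)%MS] = Sb U (perp U) (\rank U).+1.
Proof.
move=> TU; apply/setP => X; rewrite inE inPm inSb.
apply/idP/idP.
  move=> /andP [/and3P [sX -> TX] UX]; rewrite sX UX /= sub_perp.
  move: UX => /submxP [D ->]; move: TX; rewrite tot_isoE => /eqP TX.
  by rewrite trmx_mul mulmxA TX mul0mx.
move=> /and4P [sX /eqP rX UX Xp]; rewrite sX rX eqxx UX /= andbT.
have : ~~ (X <= U)%MS.
  by apply/negP => /mxrankS; rewrite rX ltnn.
case/row_subPn => i xU.
have <- : <<(U + row i X)%MS>>%MS = X.
  by apply/eqP; rewrite gen_add_eq // xU row_sub.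
apply: tot_iso_add => //; exact: submx_trans (row_sub i X) Xp.
Qed.

Lemma card_ext1 (U : 'M[F]_n) : tot_iso B U ->
  (#|[set X in Pm B (\rank U).+1 | (U <= X)%MS]|%:R : rat) = kk F (n - \rank U) (\rank U).
Proof.
move=> TU; rewrite ext1E // card_Sb_rat ?TI_perp // rank_perp //.
Qed.

End Symp.

Section Ext.
Variables (F : finFieldType) (nu : nat) (B : 'M[F]_(2 * nu)).
Hypothesis Balt : alt_form B.
Hypothesis Bnd : nondegen_form B.
Local Notation n := (2 * nu)%N.
Local Notation q := (#|F|%:R : rat).

Definition Ext (U : 'M[F]_n) m := [set W in Pm B m | (U <= W)%MS].

Lemma Nprime_step a m : (a < m)%N -> (m <= nu)%N ->
  Nprime #|F| a m nu = Nprime #|F| a.+1 m nu *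
     ((q ^+ (2 * (nu - a)) - 1) / (q ^+ (m - a) - 1)).
Proof.
move=> am mn; rewrite /Nprime (ltnW am) am.
have -> : (m - a = (m - a.+1).+1)%N by rewrite subnSK.
rewrite big_nat_recr //=; congr (_ * ((_ ^+ _ - 1) / _)).
lia.
Qed.


Lemma Ext_base a (U : 'M[F]_n) : U \in Pm B a -> Ext U a = [set U].
Proof.
rewrite inPm => /and3P [sU /eqP rU TU]; apply/setP => W; rewrite inE inPm inE.
apply/idP/eqP => [/andP [/and3P [sW /eqP rW _] UW] | ->].
  by apply/esym/sub_eq_of_rank => //; rewrite rU rW.
by rewrite sU rU eqxx TU submx_refl.
Qed.

Lemma TI_subsp (X W : 'M[F]_n) : (X <= W)%MS -> tot_iso B W -> tot_iso B X.
Proof. by rewrite !tot_isoE => XW /eqP H; apply/eqP; exact: TI_sub XW H. Qed.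

Lemma ext_count d : forall a (U : 'M[F]_n), U \in Pm B a -> (a + d <= nu)%N ->
  (#|Ext U (a + d)|%:R : rat) = Nprime #|F| a (a + d) nu.
Proof.
elim: d => [|d IH] a U HU hle.
  rewrite addn0 Ext_base // cards1 /Nprime leqnn subnn big_geq //.
have := HU; rewrite inPm => /and3P [sU /eqP rU TU].
set m := (a + d.+1)%N.
have H := dcount [set X in Pm B a.+1 | (U <= X)%MS] (Ext U m) (fun X W => (X <= W)%MS).
move/(congr1 (fun k => (k%:R : rat))): H; rewrite !natr_sum.
rewrite (eq_bigr (fun _ => Nprime #|F| a.+1 m nu)); last first.
  move=> X; rewrite inE => /andP [HX UX].
  have -> : [set y in Ext U m | (X <= y)%MS] = Ext X m.
    apply/setP => W; rewrite !inE; apply/idP/idP => [/andP[/andP[-> _] ->]//|].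
    by move=> /andP [-> XW]; rewrite XW (submx_trans UX XW).
  by rewrite /m -addSnnS IH // addSnnS.
rewrite [in RHS](eq_bigr (fun _ => kk F m a)); last first.
  move=> W; rewrite inE => /andP [HW UW].
  have -> : [set x in [set X in Pm B a.+1 | (U <= X)%MS] | (x <= W)%MS] = Sb U W (\rank U).+1.
    move: HW; rewrite inPm => /and3P [_ _ TW].
    apply/setP => X; rewrite !inE rU; apply/idP/idP.
      by move=> /andP [/andP [/and3P [-> -> _] ->] ->].
    move=> /and4P [-> -> -> XW]; rewrite XW !andbT /=; exact: TI_subsp XW TW.
  move: HW; rewrite inPm => /and3P [_ /eqP rW _].
  by rewrite card_Sb_rat // rW rU.
rewrite !sumr_const -(mulr_natl (Nprime _ _ _ _)) -(mulr_natl (kk _ _ _)).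
rewrite -rU card_ext1 // rU => H.
have kn : kk F m a != 0 by apply: kk_neq0; rewrite /m; lia.
rewrite (Nprime_step (a := a)) ?/m; [|lia|lia].
apply: (mulIf kn); rewrite -H.
have e1 : (n - a = a + 2 * (nu - a))%N by lia.
rewrite /kk e1 /m addKn !exprD exprSr.
have q1 : q - 1 != 0 by rewrite subr_eq0 Order.POrderTheory.gt_eqF // q_gt1r.
have c0 : q ^+ a != 0 by rewrite expf_neq0 // Order.POrderTheory.gt_eqF // (lt_trans ltr01 (q_gt1r F)).
have y1 : q ^+ d.+1 - 1 != 0.
  by rewrite subr_eq0 Order.POrderTheory.gt_eqF // -[X in X < _](expr0 q) qexp_lt.
field.
by rewrite y1 andbT -[X in _ - X]mulr1 -mulrBr mulf_neq0.
Qed.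

Lemma ext_count' a m (U : 'M[F]_n) : U \in Pm B a -> (m <= nu)%N ->
  (#|Ext U m|%:R : rat) = Nprime #|F| a m nu.
Proof.
move=> HU mn; case: (leqP a m) => am.
  by rewrite -(subnKC am) ext_count // subnKC.
rewrite /Nprime leqNgt am /=.
have -> : Ext U m = set0.
  apply/setP => W; rewrite !inE; apply/negP => /andP [/and3P [_ /eqP rW _] /mxrankS].
  by move: HU; rewrite inPm => /and3P [_ /eqP -> _]; rewrite rW leqNgt am.
by rewrite cards0.
Qed.

End Ext.

Section Arith.
Variable (F : finFieldType).
Local Notation q := (#|F|%:R : rat).

Lemma q_gt0 : 0 < q.
Proof. exact: lt_trans ltr01 (q_gt1r F). Qed.

Lemma qX_neq0 k : q ^+ k != 0.
Proof. by rewrite expf_neq0 // gt_eqF // q_gt0. Qed.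

Lemma qX_ge1 k : 1 <= q ^+ k.
Proof. by rewrite exprn_ege1 // ltW // q_gt1r. Qed.

Lemma qX_eq1_or k : q ^+ k = 1 \/ q <= q ^+ k.
Proof.
case: k => [|k]; first by left.
by right; rewrite -[X in X <= _]expr1 qexp_le.
Qed.

Lemma ineq1 (y : rat) : (y = 1 \/ q <= y) ->
  (q * y - 1) / (q - 1) - q * ((q * y - 1) / (q - 1) * ((y - 1) / (q - 1))
     / ((q * q - 1) / (q - 1))) <= 1.
Proof.
have q1 := q_gt1r F.
have q10 : q - 1 != 0 by rewrite subr_eq0 gt_eqF.
have qq0 : q * q - 1 != 0.
  by rewrite subr_eq0 gt_eqF // (lt_le_trans q1) // ler_peMr // ?ltW // q_gt0.
have qp0 : q + 1 != 0 by rewrite gt_eqF // ltr_wpDl // ?ltW // q_gt0.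
have E : (q * y - 1) / (q - 1) - q * ((q * y - 1) / (q - 1) * ((y - 1) / (q - 1))
     / ((q * q - 1) / (q - 1))) = 1 - q * (y - 1) * (q * y - q * q) / ((q - 1) * (q * q - 1)).
  by field; rewrite q10 qq0.
rewrite E lerBlDr lerDl; case=> [-> | hy].
  by rewrite subrr mulr0 !mul0r.
apply: divr_ge0; last by apply: mulr_ge0; rewrite subr_ge0 ?ltW //; nra.
apply: mulr_ge0; first by apply: mulr_ge0; rewrite ?subr_ge0; nra.
by rewrite subr_ge0; nra.
Qed.


Lemma q10 : q - 1 != 0.
Proof. by rewrite subr_eq0 gt_eqF // q_gt1r. Qed.

Lemma kk_form1 t k : kk F (t.+1 + k) t = (q * q ^+ k - 1) / (q - 1).
Proof.
rewrite /kk addSn -addnS exprD !exprSr; have := qX_neq0 t; have := q10 => h1 h2.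
field; rewrite h1 /= -[X in _ - X]mulr1 -mulrBr mulf_neq0 //.
Qed.

Lemma kk_form2 t k : kk F (t.+1 + k) t.+1 = (q ^+ k - 1) / (q - 1).
Proof.
rewrite /kk exprD !exprSr; have := qX_neq0 t; have := q10 => h1 h2.
field; rewrite h1 /= -[X in _ - X]mulr1 -mulrBr !mulf_neq0 // gt_eqF // q_gt0 //.
Qed.

Lemma kk_form3 t : kk F t.+2 t = (q * q - 1) / (q - 1).
Proof.
rewrite /kk !exprSr; have := qX_neq0 t; have := q10 => h1 h2.
field; rewrite h1 /= -[X in _ - X]mulr1 -mulrBr !mulf_neq0 //.
Qed.

Lemma kk_ineq r t : (t <= r)%N ->
  kk F r t - q * (kk F r t * kk F r t.+1 / kk F t.+2 t) <= ((t < r)%N)%:R.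
Proof.
rewrite leq_eqVlt => /orP [/eqP <- | tr].
  by rewrite ltnn /kk subrr !mul0r mulr0 subrr.
rewrite tr; have -> : r = (t.+1 + (r - t.+1))%N by lia.
rewrite kk_form1 kk_form2 kk_form3 -[q * q ^+ _ - 1]/(q * q ^+ (r - t.+1) - 1).
apply: ineq1; exact: qX_eq1_or.
Qed.

End Arith.

Lemma arith_pos (q y b X : rat) : 2 <= q -> q <= y -> y <= X -> q * b <= X -> q <= b ->
  0 < (q * y - 1) / (q - 1) * ((X * X - 1) / (b - 1))
      - q * ((q * y - 1) / (q - 1) * ((y - 1) / (q - 1)) / ((q * q - 1) / (q - 1))).
Proof.
move=> q2 qy yX qbX qb.
have q1 : 1 < q by lra.
have q10 : q - 1 != 0 by rewrite subr_eq0 gt_eqF.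
have b10 : b - 1 != 0 by rewrite subr_eq0 gt_eqF // (lt_le_trans q1).
have qq0 : q * q - 1 != 0 by rewrite subr_eq0 gt_eqF //; nra.
have E : (q * y - 1) / (q - 1) * ((X * X - 1) / (b - 1))
      - q * ((q * y - 1) / (q - 1) * ((y - 1) / (q - 1)) / ((q * q - 1) / (q - 1)))
  = (q * y - 1) / (q - 1) * (((X * X - 1) * (q * q - 1) - q * (y - 1) * (b - 1))
      / ((b - 1) * (q * q - 1))).
  by field; rewrite q10 b10 qq0.
have qy1 : 1 < q * y.
  by apply: (lt_le_trans q1); rewrite -[X in X <= _]mulr1 ler_wpM2l //; lra.
rewrite E; apply: mulr_gt0; first by apply: divr_gt0; lra.
have qq1 : 1 < q * q by nra.
apply: divr_gt0; last by apply: mulr_gt0; lra.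
have h1 : q * (y - 1) * (b - 1) < q * y * b.
  have -> : q * (y - 1) * (b - 1) = q * y * b - q * (y + b - 1) by ring.
  have : 0 < q * (y + b - 1) by apply: mulr_gt0; lra.
  lra.
have h2 : q * y * b <= X * X.
  have -> : q * y * b = y * (q * b) by ring.
  apply: (le_trans (y := y * X)); first by apply: ler_wpM2l; lra.
  by apply: ler_wpM2r; lra.
have X2 : 2 <= X by lra.
have XX : 4 <= X * X by nra.
have qq3 : 3 <= q * q - 1 by nra.
have h3 : X * X < (X * X - 1) * (q * q - 1).
  have : (X * X - 1) * 3 <= (X * X - 1) * (q * q - 1) by apply: ler_wpM2l; lra.
  lra.
lra.
Qed.

Lemma arith_p2 (q y b Z : rat) : 2 <= q -> q <= y -> q <= b -> q * q * q * b * (y * y) <= Z ->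
  q * ((q * y - 1) / (q - 1) * ((y - 1) / (q - 1)) / ((q * q - 1) / (q - 1)))
   <= q^-2 * ((Z - 1) / (b - 1)).
Proof.
move=> q2 qy qb qZ.
have q1 : 1 < q by lra.
have q10 : q - 1 != 0 by rewrite subr_eq0 gt_eqF.
have b10 : b - 1 != 0 by rewrite subr_eq0 gt_eqF // (lt_le_trans q1).
have qq0 : q * q - 1 != 0 by rewrite subr_eq0 gt_eqF //; nra.
have q0 : q != 0 by rewrite gt_eqF //; lra.
have E : q^-2 * ((Z - 1) / (b - 1))
   - q * ((q * y - 1) / (q - 1) * ((y - 1) / (q - 1)) / ((q * q - 1) / (q - 1)))
   = ((q - 1) * (q * q - 1) * (Z - 1) - q * q * q * (q * y - 1) * (y - 1) * (b - 1))
     / (q * q * (b - 1) * (q - 1) * (q * q - 1)).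
  by rewrite expr2 invfM; field; rewrite q10 b10 qq0 q0.
rewrite -subr_ge0 E; apply: divr_ge0; last first.
  apply: mulr_ge0; last nra.
  apply: mulr_ge0; last nra.
  apply: mulr_ge0; nra.
have y0 : 0 <= y - 1 by lra.
have b0 : 0 <= b - 1 by lra.
have h1 : (q * y - 1) * (y - 1) <= q * y * y by nra.
have h1' : (q * y - 1) * (y - 1) * (b - 1) <= q * y * y * b.
  apply: (le_trans (y := q * y * y * (b - 1))); first by apply: ler_wpM2r.
  by apply: ler_wpM2l; nra.
have h2 : q * q * q * ((q * y - 1) * (y - 1) * (b - 1)) <= q * Z.
  apply: (le_trans (y := q * q * q * (q * y * y * b))); first by apply: ler_wpM2l; nra.
  nra.
have h3 : q * Z <= (q - 1) * (q * q - 1) * (Z - 1).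
  have Zq : q * q * q <= Z.
    apply: le_trans qZ; have -> : q * q * q * b * (y * y) = (q * q * q) * (b * (y * y)) by ring.
    rewrite -[X in X <= _]mulr1; apply: ler_wpM2l; first by nra.
    have : 2 <= y by lra.
    have : 2 <= b by lra.
    nra.
  have A : q + 1 <= (q - 1) * (q * q - 1) by nra.
  have Z1 : q + 1 <= Z by nra.
  have : (q + 1) * (Z - 1) <= (q - 1) * (q * q - 1) * (Z - 1) by apply: ler_wpM2r; lra.
  nra.
have -> : q * q * q * (q * y - 1) * (y - 1) * (b - 1) = q * q * q * ((q * y - 1) * (y - 1) * (b - 1)) by ring.
lra.
Qed.

Section Main.
Variables (F : finFieldType) (nu m1 m2 t : nat) (B : 'M[F]_(2 * nu)).
Hypothesis Balt : alt_form B.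
Hypothesis Bnd : nondegen_form B.
Hypothesis ht : (0 < t)%N.
Hypothesis h1 : (t.+1 <= m1 < nu)%N.
Hypothesis h2 : (t.+1 <= m2 < nu)%N.
Variables (M T : 'M[F]_(2 * nu)).
Hypothesis hM : M \in Pm B m2.+1.
Hypothesis hT : is_subspace T.
Hypothesis hTr : \rank T = t.
Hypothesis hTM : (T <= M)%MS.
Local Notation n := (2 * nu)%N.
Local Notation q := (#|F|%:R : rat).

Lemma M_props : [/\ is_subspace M, \rank M = m2.+1 & tot_iso B M].
Proof. by move: hM; rewrite inPm => /and3P [-> /eqP -> ->]. Qed.

Lemma T_Pm : T \in Pm B t.
Proof.
case: M_props => _ _ TM.
by rewrite inPm hT hTr eqxx /=; exact: TI_subsp hTM TM.
Qed.

Lemma exists_hyp : exists H : 'M[F]_n, H \in subsp_of M m2 /\ ~~ (T <= H)%MS.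
Proof.
have T0 : T != 0 by rewrite -mxrank_eq0 hTr -lt0n.
have [i vi] : exists i, row i T != 0.
  apply/existsP; apply: contraR T0 => /existsPn H; apply/eqP/row_matrixP => i.
  by rewrite row0; apply/eqP; move: (H i); rewrite negbK.
set v := row i T.
have [j vj] : exists j, v 0 j != 0.
  apply/existsP; apply: contraR vi => /existsPn H; apply/eqP/matrixP => a b.
  by rewrite ord1 [RHS]mxE; apply/eqP; move: (H b); rewrite negbK.
set K := kermx (delta_mx j (0 : 'I_1) : 'M[F]_(n, 1)).
have inK (x : 'rV[F]_n) : (x <= K)%MS = (x 0 j == 0).
  rewrite sub_kermx -colE; apply/eqP/eqP => [/matrixP /(_ 0 0)|H].
    by rewrite !mxE.
  by apply/matrixP => a b; rewrite !ord1 !mxE.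
have vM : (v <= M)%MS by exact: submx_trans (row_sub i T) hTM.
have vK : ~~ (v <= K)%MS by rewrite inK.
case: M_props => sM rM TM.
have rK : \rank K = n.-1.
  rewrite mxrank_ker; suff -> : \rank (delta_mx j (0 : 'I_1) : 'M[F]_(n, 1)) = 1%N by rewrite subn1.
  apply/eqP; rewrite eqn_leq rank_leq_col lt0n mxrank_eq0; apply/eqP => /matrixP /(_ j 0).
  by rewrite !mxE !eqxx /= => /eqP; rewrite oner_eq0.
have rMK : \rank (M :&: K)%MS = m2.
  have le1 : (\rank (M :&: K)%MS < \rank M)%N.
    rewrite (ltn_leqif (mxrank_leqif_sup (capmxSl M K))); apply: contra vK => MK.
    exact: submx_trans vM (submx_trans MK (capmxSr M K)).
  have := mxrank_sum_cap M K; have := rank_leq_col (M + K)%MS.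
  move: le1; rewrite rM rK => le1 le2 e; lia.
exists <<(M :&: K)%MS>>%MS; split.
  by rewrite /subsp_of inE is_subspace_gen !genmxE rMK eqxx capmxSl.
apply: contra vK => TH; apply: submx_trans (row_sub i T) _.
by apply: submx_trans TH _; rewrite genmxE capmxSr.
Qed.


Lemma C2_lb : Nprime #|F| t m2 nu + 1 <= (#|C2 B M T m2|%:R : rat).
Proof.
have [H [HS HT]] := exists_hyp.
have HE : H \notin Ext B T m2 by rewrite inE negb_and HT orbT.
have sub : H |: Ext B T m2 \subset C2 B M T m2.
  apply/subsetP => W; rewrite in_setU1 => /orP [/eqP -> | HW]; rewrite /C2 in_setU ?HS ?orbT //.
  by rewrite HW.
have := subset_leq_card sub; rewrite cardsU1 HE add1n.
rewrite -(ext_count' Balt Bnd T_Pm) ?(ltnW (andP h2).2) // => le.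
by rewrite natr1 ler_nat.
Qed.


Lemma card_sep (I : finType) (Z : {set I}) (f : pred I) :
  #|[set y in Z | f y]| = (\sum_(y in Z) (f y : nat))%N.
Proof.
rewrite -sum1_card big_mkcond [RHS]big_mkcond; apply: eq_bigr => y _.
by rewrite !inE; case: (y \in Z); case: (f y).
Qed.

Lemma sumExt (S : {set 'M[F]_n}) k : (forall P, P \in S -> P \in Pm B k /\ (T <= P)%MS) ->
  (\sum_(W in Ext B T m1) (#|[set P in S | (P <= W)%MS]|%:R : rat))
   = #|S|%:R * Nprime #|F| k m1 nu.
Proof.
move=> HS; rewrite -natr_sum -(dcount S (Ext B T m1) (fun P W => (P <= W)%MS)) natr_sum.
rewrite (eq_bigr (fun _ => Nprime #|F| k m1 nu)); first by rewrite sumr_const mulr_natl.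
move=> P HP; have [PP TP] := HS P HP.
have -> : [set y in Ext B T m1 | (P <= y)%MS] = Ext B P m1.
  apply/setP => W; rewrite !inE; apply/idP/idP => [/andP[/andP[-> _] ->]//|].
  by move=> /andP [-> PW]; rewrite PW (submx_trans TP PW).
by rewrite (ext_count' Balt Bnd PP) // ltnW // (andP h1).2.
Qed.


Lemma SbWM (W : 'M[F]_n) k :
  [set P in Sb T M k | (P <= W)%MS] = Sb T (W :&: M)%MS k.
Proof.
apply/setP => P; rewrite !inE sub_capmx.
by apply/idP/idP => [/andP [/and4P [-> -> -> ->] ->] // | /and4P [-> -> -> /andP [-> ->]]].
Qed.

Lemma SbM_props k P : P \in Sb T M k -> P \in Pm B k /\ (T <= P)%MS.
Proof.
rewrite inSb => /and4P [sP rP TP PM]; split => //.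
by rewrite inPm sP rP /=; case: M_props => _ _ TM; exact: TI_subsp PM TM.
Qed.

Lemma C1_lb :
  kk F m2.+1 t * Nprime #|F| t.+1 m1 nu
  - q * (kk F m2.+1 t * kk F m2.+1 t.+1 / kk F t.+2 t) * Nprime #|F| t.+2 m1 nu
  <= (#|C1 B M T m1 t|%:R : rat).
Proof.
case: M_props => sM rM TM.
have e1 : (#|Sb T M t.+1|%:R : rat) = kk F m2.+1 t by rewrite -hTr card_Sb_rat // rM.
have e2 : (#|Sb T M t.+2|%:R : rat) = kk F m2.+1 t * kk F m2.+1 t.+1 / kk F t.+2 t.
  by rewrite -hTr card_Sb2_rat // rM.
rewrite -e2 -e1 -mulrA -(sumExt (@SbM_props t.+1)) -(sumExt (@SbM_props t.+2)).
have C1E : C1 B M T m1 t = [set W in Ext B T m1 | (t < \rank (W :&: M))%N].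
  by apply/setP => W; rewrite !inE andbA.
rewrite C1E card_sep natr_sum mulr_sumr -sumrB; apply: ler_sum => W.
rewrite inE => /andP [_ TW].
have TWM : (T <= W :&: M)%MS by rewrite sub_capmx TW hTM.
rewrite !SbWM -hTr card_Sb_rat // card_Sb2_rat //.
by apply: kk_ineq; exact: mxrankS.
Qed.


Local Notation s1 := (kk F m2.+1 t).
Local Notation s2 := (kk F m2.+1 t * kk F m2.+1 t.+1 / kk F t.+2 t).
Local Notation N1 := (Nprime #|F| t.+1 m1 nu).
Local Notation N2 := (Nprime #|F| t.+2 m1 nu).
Local Notation k := (m2 - t)%N.

Lemma m2E : m2.+1 = (t.+1 + k)%N.
Proof. move: h2 => /andP [a b]; lia. Qed.

Lemma gbin_eq1 : gbin #|F| (m2.+1 - t) 1 = s1.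
Proof.
rewrite /gbin big_ord1 subn0 expr1 m2E kk_form1 -exprS.
by congr ((_ ^+ _ - 1) / _); lia.
Qed.

Lemma gbin_eq2 : gbin #|F| (m2.+1 - t) 2 = s2.
Proof.
rewrite /gbin !big_ord_recr big_ord0 /=.
have -> : (m2.+1 - t - 0 = k.+1)%N by move: h2 => /andP [? ?]; lia.
have -> : (m2.+1 - t - 1 = k)%N by move: h2 => /andP [? ?]; lia.
rewrite m2E kk_form1 kk_form2 kk_form3.
rewrite !subn0 subSnn expr1 exprS !expr2.
have := q10 F => a; have := qX_neq0 F k => b.
have qq0 : q * q - 1 != 0.
  by rewrite subr_eq0 gt_eqF // -expr2 -[X in X < _](expr0 q) qexp_lt.
field; rewrite a qq0 //.
Qed.

Lemma s0E : s0 #|F| nu m1 m2.+1 t = s1 * N1 - q * s2 * N2.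
Proof. by rewrite /s0 gbin_eq1 gbin_eq2. Qed.


Lemma qX_gt1 j : (0 < j)%N -> 1 < q ^+ j.
Proof. by move=> j0; rewrite -[X in X < _](expr0 q) qexp_lt. Qed.

Lemma Nprime_gt0 a m : (a <= m)%N -> (m <= nu)%N -> 0 < Nprime #|F| a m nu.
Proof.
move=> am mn; rewrite /Nprime am big_nat_cond; apply: prodr_gt0 => i /andP [/andP [i1 _] _].
by apply: divr_gt0; rewrite subr_gt0 qX_gt1 //; lia.
Qed.

Lemma Nprime_ge0 a m : (m <= nu)%N -> 0 <= Nprime #|F| a m nu.
Proof.
move=> mn; case: (leqP a m) => am; first by rewrite ltW // Nprime_gt0.
by rewrite /Nprime leqNgt am.
Qed.

Lemma q2 : 2 <= q.
Proof. by rewrite ler_nat q_gt1. Qed.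

Lemma s1_form : s1 = (q * q ^+ k - 1) / (q - 1).
Proof. by rewrite m2E kk_form1. Qed.

Lemma s2_form : s2 = (q * q ^+ k - 1) / (q - 1) * ((q ^+ k - 1) / (q - 1))
     / ((q * q - 1) / (q - 1)).
Proof. by rewrite m2E kk_form1 kk_form2 kk_form3. Qed.

Lemma N1_split : (t.+1 < m1)%N ->
  N1 = N2 * ((q ^+ (nu - t.+1) * q ^+ (nu - t.+1) - 1) / (q ^+ (m1 - t.+1) - 1)).
Proof.
move=> tm; rewrite Nprime_step //; last by move: h1 => /andP [? ?]; lia.
by rewrite -expr2 -exprM mulnC.
Qed.

Lemma N_base : ~~ (t.+1 < m1)%N -> N1 = 1 /\ N2 = 0.
Proof.
rewrite -leqNgt => mt; have e : m1 = t.+1 by move: h1 => /andP [? ?]; lia.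
rewrite /Nprime e leqnn ltnn subnn big_geq //.
Qed.

Lemma s0_pos : 0 < s1 * N1 - q * s2 * N2.
Proof.
have hk : (0 < k)%N by move: h2 => /andP [? ?]; lia.
case: (boolP (t.+1 < m1)%N) => tm; last first.
  have [-> ->] := N_base tm; rewrite mulr0 subr0 mulr1 s1_form.
  apply: divr_gt0; rewrite subr_gt0 ?q_gt1r //.
  by rewrite -exprS qX_gt1.
rewrite N1_split //.
set R := ((q ^+ (nu - t.+1) * q ^+ (nu - t.+1) - 1) / (q ^+ (m1 - t.+1) - 1)).
have -> : s1 * (N2 * R) - q * s2 * N2 = N2 * (s1 * R - q * s2) by ring.
apply: mulr_gt0.
  by apply: Nprime_gt0; move: h1 => /andP [? ?]; lia.
rewrite s2_form s1_form /R; apply: arith_pos; first exact: q2.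
- by rewrite -[X in X <= _]expr1 qexp_le.
- by apply: qexp_le; move: h1 h2 => /andP [? ?] /andP [? ?]; lia.
- by rewrite -exprS qexp_le //; move: h1 h2 => /andP [? ?] /andP [? ?]; lia.
- by rewrite -[X in X <= _]expr1 qexp_le //; lia.
Qed.


Lemma part2_ineq : (m1 + 2 * m2 - t + 4 <= 2 * nu)%N ->
  (gbin #|F| (m2 - t + 1) 1 - q^-2) * N1 <= s1 * N1 - q * s2 * N2.
Proof.
move=> hc.
have -> : (m2 - t + 1 = m2.+1 - t)%N by move: h2 => /andP [? ?]; lia.
rewrite gbin_eq1 mulrBl lerD2l lerN2.
case: (boolP (t.+1 < m1)%N) => tm; last first.
  have [-> ->] := N_base tm; rewrite mulr0 mulr1 invr_ge0 exprn_ge0 // ltW // q_gt0.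
rewrite N1_split //.
set R := ((q ^+ (nu - t.+1) * q ^+ (nu - t.+1) - 1) / (q ^+ (m1 - t.+1) - 1)).
have -> : q * s2 * N2 = N2 * (q * s2) by ring.
have -> : q^-2 * (N2 * R) = N2 * (q^-2 * R) by ring.
apply: ler_wpM2l; first by apply: Nprime_ge0; move: h1 => /andP [? ?]; lia.
rewrite s2_form /R; apply: arith_p2; first exact: q2.
- by rewrite -[X in X <= _]expr1 qexp_le //; move: h2 => /andP [? ?]; lia.
- by rewrite -[X in X <= _]expr1 qexp_le //; lia.
have E3 : q * q * q = q ^+ 3 by rewrite !exprS expr0 mulr1 mulrA.
rewrite E3 -!exprD; apply: qexp_le; move: h1 h2 => /andP [? ?] /andP [? ?]; lia.
Qed.


Lemma main_res :
  s0 #|F| nu m1 m2.+1 t * Nprime #|F| t m2 nu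
    < ((#|C1 B M T m1 t| * #|C2 B M T m2|)%N%:R : rat) /\
  ((m1 + 2 * m2 - t + 4 <= 2 * nu)%N ->
   (gbin #|F| (m2 - t + 1) 1 - (#|F|%:R : rat) ^- 2)
     * Nprime #|F| t.+1 m1 nu * Nprime #|F| t m2 nu
    < ((#|C1 B M T m1 t| * #|C2 B M T m2|)%N%:R : rat)).
Proof.
have C1l := C1_lb; have C2l := C2_lb; have sp := s0_pos.
rewrite -s0E in C1l sp.
have N0 : 0 <= Nprime #|F| t m2 nu by apply: Nprime_ge0; move: h2 => /andP [? ?]; lia.
have C20 : 0 <= (#|C2 B M T m2|%:R : rat) by [].
have P1 : s0 #|F| nu m1 m2.+1 t * Nprime #|F| t m2 nu
    < ((#|C1 B M T m1 t| * #|C2 B M T m2|)%N%:R : rat).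
  rewrite natrM; apply: (lt_le_trans (y := s0 #|F| nu m1 m2.+1 t * (Nprime #|F| t m2 nu + 1))).
    by rewrite ltr_pM2l // ltrDl.
  apply: (le_trans (y := s0 #|F| nu m1 m2.+1 t * #|C2 B M T m2|%:R)).
    by rewrite ler_wpM2l // ltW.
  by rewrite ler_wpM2r.
split => // hc; apply: le_lt_trans P1.
by apply: ler_wpM2r => //; rewrite s0E; exact: part2_ineq.
Qed.

End Main.

Theorem lemma4p1 (F : finFieldType) (nu m1 m2 t : nat) (B : 'M[F]_(2 * nu))
  (Balt : alt_form B) (Bnd : nondegen_form B)
  (ht : (0 < t)%N) (h1 : (t.+1 <= m1 < nu)%N) (h2 : (t.+1 <= m2 < nu)%N)
  (M T : 'M[F]_(2 * nu)) (hM : M \in Pm B m2.+1)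
  (hT : is_subspace T) (hTr : \rank T = t) (hTM : (T <= M)%MS) :
  let q := #|F| in
  let c1 : rat := (#|C1 B M T m1 t| * #|C2 B M T m2|)%N%:R in
  s0 q nu m1 m2.+1 t * Nprime q t m2 nu < c1 /\
  ((m1 + 2 * m2 - t + 4 <= 2 * nu)%N ->
   (gbin q (m2 - t + 1) 1 - (q%:R : rat) ^- 2)
     * Nprime q t.+1 m1 nu * Nprime q t m2 nu < c1).
Proof.
move=> q c1; rewrite /q /c1.
exact: (main_res Balt Bnd ht h1 h2 hM hT hTr hTM).
Qed.
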